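(* Let $H$ be a Heyting algebra and $f,g:H\to H$ monotone polynomials such that $\mu.f=f^m(\bot)$ and $\mu.g=g^n(\bot)$ for some $m,n\ge0$. Then $\mu.(f\wedge g)=(f\wedge g)^{m+n-1}(\bot)$, with the convention $k^{j}(\bot)=\bot$ for $j<0$.
   Context: A function $f:H\to H$ is a polynomial if there exist an IPC formula $\phi$, a variable $x$ and a valuation $v$ in $H$ of the other variables of $\phi$ such that $f(h)=[\![\phi]\!]_{(v,h/x)}$ for all $h$. $f\wedge g$ is the pointwise meet; $\mu$ denotes least fixed point. *)

(* Defs.v *)
From HB Require Import structures.
From mathcomp Require Import all_boot all_order.
Set Implicit Arguments. Unset Strict Implicit. Unset Printing Implicit Defensive.
Import Order.TTheory.
Local Open Scope order_scope.

Record heytingAlgebra := HeytingAlgebra {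
  ha_disp : Order.disp_t;
  ha_sort : tbLatticeType ha_disp;
  ha_imp : ha_sort -> ha_sort -> ha_sort;
  ha_impP : forall a b x : ha_sort, (x `&` a <= b) = (x <= ha_imp a b)
}.
Coercion ha_sort : heytingAlgebra >-> tbLatticeType.

Inductive ipc_formula : Type :=
  | FVar of nat
  | FBot
  | FTop
  | FAnd of ipc_formula & ipc_formula
  | FOr of ipc_formula & ipc_formula
  | FImp of ipc_formula & ipc_formula.

Fixpoint ipc_eval (H : heytingAlgebra) (v : nat -> H) (phi : ipc_formula) : H :=
  match phi with
  | FVar i => v i
  | FBot => \bot
  | FTop => \top
  | FAnd p q => ipc_eval v p `&` ipc_eval v q
  | FOr p q => ipc_eval v p `|` ipc_eval v q
  | FImp p q => ha_imp (ipc_eval v p) (ipc_eval v q)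
  end.

Definition upd_val (H : heytingAlgebra) (v : nat -> H) (x : nat) (h : H) : nat -> H :=
  fun i => if i == x then h else v i.

Definition is_polynomial (H : heytingAlgebra) (f : H -> H) : Prop :=
  exists (phi : ipc_formula) (x : nat) (v : nat -> H),
    forall h : H, f h = ipc_eval (upd_val v x h) phi.

Definition monotone (H : heytingAlgebra) (f : H -> H) : Prop :=
  forall a b : H, a <= b -> f a <= f b.

Definition is_lfp (H : heytingAlgebra) (f : H -> H) (a : H) : Prop :=
  f a = a /\ forall b : H, f b = b -> a <= b.

Definition fmeet (H : heytingAlgebra) (f g : H -> H) : H -> H :=
  fun h => f h `&` g h.

(* Main.v *)
Require Import Defs.
From mathcomp Require Import all_boot all_order.
From mathcomp Require Import zify.
From Stdlib Require Import Lia.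
Local Open Scope order_scope.
Import Order.TTheory.

Section S.
Variable H : heytingAlgebra.

Lemma mp (a b : H) : ha_imp a b `&` a <= b.
Proof. by rewrite ha_impP lexx. Qed.

Lemma distr (c p q : H) : c `&` (p `|` q) <= (c `&` p) `|` (c `&` q).
Proof.
rewrite meetC ha_impP leUx -!ha_impP; apply/andP; split.
  by rewrite meetC leUl.
by rewrite meetC leUr.
Qed.

Lemma compat (v : nat -> H) x phi : forall (c a b : H), c `&` a = c `&` b ->
  c `&` ipc_eval (upd_val v x a) phi <= ipc_eval (upd_val v x b) phi.
Proof.
elim: phi => [i|||p IHp q IHq|p IHp q IHq|p IHp q IHq] c a b E /=.
- rewrite /upd_val; case: (i == x); last exact: leIr.
  by rewrite E leIr.
- exact: leIr.
- exact: lex1.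
- rewrite lexI; apply/andP; split.
    apply: le_trans (IHp _ _ _ E); by rewrite lexI leIl /= (le_trans (leIr _ _) (leIl _ _)).
  apply: le_trans (IHq _ _ _ E); by rewrite lexI leIl /= (le_trans (leIr _ _) (leIr _ _)).
- apply: le_trans (distr _ _ _) _; rewrite leU2 //; [exact: IHp | exact: IHq].
- rewrite -ha_impP.
  have E' := esym E.
  set A := ha_imp _ _.
  apply: (@le_trans _ _ (c `&` (A `&` ipc_eval (upd_val v x a) p))).
    rewrite lexI (le_trans (leIl _ _) (leIl _ _)) /= lexI (le_trans (leIl _ _) (leIr _ _)) /=.
    apply: le_trans (IHp _ _ _ E'); by rewrite lexI (le_trans (leIl _ _) (leIl _ _)) leIr.
  apply: le_trans (IHq _ _ _ E).
  rewrite lexI leIl /=; exact: le_trans (leIr _ _) (mp _ _).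
Qed.

Lemma compat_poly (f : H -> H) (c a b : H) : is_polynomial f ->
  c `&` a = c `&` b -> c `&` f a <= f b.
Proof. by move=> [phi [x [v Hf]]] E; rewrite !Hf; apply: compat. Qed.

Lemma side (p : H -> H) (P c A : H) : is_polynomial p -> monotone p ->
  (P = \bot \/ P `&` c <= A) -> p P `&` c <= p A.
Proof.
move=> pp mp [->|hP].
  by apply: le_trans (leIl _ _) _; apply: mp; exact: le0x.
rewrite meetC; apply: le_trans (mp _ _ hP).
apply: compat_poly => //.
by rewrite (meetC P c) meetA meetxx.
Qed.

End S.

(* (m + n).-1 with iter 0 = bot realizes the convention k^j(bot) = bot for j < 0. *)
Theorem mainTheorem18 (H : heytingAlgebra) (f g : H -> H) (m n : nat) :
  is_polynomial f -> is_polynomial g -> monotone f -> monotone g ->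
  is_lfp f (iter m f \bot) -> is_lfp g (iter n g \bot) ->
  is_lfp (fmeet f g) (iter (m + n).-1 (fmeet f g) \bot).
Proof.
move=> pf pg mf mg [fF lF] [gG lG].
set h := fmeet f g.
set F := iter m f \bot. set G := iter n g \bot.
have mh : monotone h.
  move=> x y xy; rewrite /h /fmeet; apply: leI2; [exact: mf | exact: mg].
have chain : forall k, iter k h \bot <= iter k.+1 h \bot.
  elim=> [|k IH]; first exact: le0x.
  by rewrite [iter k.+2 _ _]/= [iter k.+1 _ _]/=; apply: mh.
have upper : forall k, iter k h \bot <= F `&` G.
  elim=> [|k IH]; first exact: le0x.
  apply: (@le_trans _ _ (f F `&` g G)); last by rewrite /F /G fF gG.
  rewrite [iter k.+1 _ _]/= {1}/h /fmeet.
  apply: leI2; [apply: mf | apply: mg]; apply: le_trans IH _; [exact: leIl|exact: leIr].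
have lower : forall k i j, i + j = k.+1 -> (0 < i)%N -> (0 < j)%N ->
    iter i f \bot `&` iter j g \bot <= iter k h \bot.
  elim=> [|k IH] i j Hij Hi Hj.
    by exfalso; move: Hij Hi Hj; case: i => [|[|i]] //; case: j => [|j] //; rewrite addnS.
  rewrite [iter k.+1 _ _]/= {2}/h /fmeet lexI; apply/andP; split.
    case: i Hij Hi => [|i] // Hij _ /=.
    apply: side => //.
    case: i Hij => [|i] Hij; first by left.
    right; apply: IH => //; lia.
  case: j Hij Hj => [|j] // Hij _ /=.
  rewrite meetC; apply: side => //.
  case: j Hij => [|j] Hij; first by left.
  right; rewrite meetC; apply: IH => //; lia.
have eqK : iter (m + n).-1 h \bot = F `&` G.
  apply/eqP; rewrite eq_le upper /=.
  have [m0|mp] := posnP m.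
    by rewrite /F m0 /= meetC; apply: le_trans (leIr _ _) _; exact: le0x.
  have [n0|np] := posnP n.
    by rewrite /G n0 /=; apply: le_trans (leIr _ _) _; exact: le0x.
  apply: lower => //; lia.
split.
  apply/eqP; rewrite eq_le; apply/andP; split.
    by rewrite -[h _]/(iter (m + n).-1.+1 h \bot) eqK upper.
  exact: chain.
move=> b hb; elim: (m + n).-1 => [|k IH]; first exact: le0x.
by rewrite -hb /=; apply: mh.
Qed.
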